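(* Consider an instance of the Side-Access Compact Retrieval Problem, a feasible solution, a cycle $c$ of it, and the set $Y$ of targets retrieved in cycle $c$. List the distinct heights $\{h_c(b): b\in Y\}$ in increasing order as $h_1<\dots<h_p$. Then $h_{i+1}=h_i+1$ for all $i\in\{1,\dots,p-1\}$, i.e., the heights of $Y$ form a consecutive interval.
   Context: A slice is a sequence of stacks $T=(1,\dots,m)$, indexed from the entry side (stack $1$) outward; ''left'' means smaller index. Stack $t$ initially consists of $h(t)\ge0$ unit loads (ULs) stacked without gaps; a UL at height $k$ has exactly $k$ ULs below it in its stack. A pick-list $\mathcal B$ of target ULs is given; target $b$ lies in stack $s(b)$ at initial height $h(b)$. Retrieval proceeds in cycles $c=1,2,\dots$; $h_c(t)$, $h_c(b)$ are the heights of stack $t$ and of a not-yet-retrieved target $b$ at the start of cycle $c$ ($h_1=h$). In cycle $c$ one chooses clearance levels $\ell_c(t)\in\{0,\dots,h_c(t)\}$: the top $e_c(t)=h_c(t)-\ell_c(t)$ ULs of stack $t$ are lifted for the whole cycle. Then a sequence $(b_{c,1},\dots,b_{c,k})$ of targets is retrieved, with residual heights $d_{c,0}=\ell_c$ and $d_{c,i}(t)=d_{c,i-1}(t)-1$ if $t=s(b_{c,i})$, else unchanged. Retrieving $b$ (stack $t$, height $h=h_c(b)$) as the $i$-th retrieval requires accessibility: (a) $d_{c,i-1}(t)=h+1$ and (b) $d_{c,i-1}(t')=h$ for all $t'<t$. Afterwards lifted ULs are lowered, $h_{c+1}(t)=d_{c,k}(t)+e_c(t)$, and each remaining target's height decreases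 by the number of targets retrieved in cycle $c$ below it in its stack. Non-targets are never removed. A solution is feasible if every target is retrieved exactly once and is accessible when retrieved. *)

(* Defs.v *)
(* Side-Access Compact Retrieval Problem, modelled on heights
   exactly as in the paper. Stacks are indexed by nat 1..m; targets form a
   finType B. *)
From mathcomp Require Import all_boot.
Set Implicit Arguments. Unset Strict Implicit. Unset Printing Implicit Defensive.

Section Scrp.
Variable B : finType.
Variable s : B -> nat.

(* A cycle: clearance levels l_c(t) and the retrieval sequence (b_{c,1..k}). *)
Definition cycle_t := ((nat -> nat) * seq B)%type.
(* A state at the start of a cycle: h_c(t) for stacks, h_c(b) for targets. *)
Definition state_t := ((nat -> nat) * (B -> nat))%type.

Definition resid (l : nat -> nat) (pre : seq B) (t : nat) : nat :=
  l t - count (fun b => s b == t) pre.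

Definition accessible (hb : B -> nat) (l : nat -> nat) (pre : seq B) (b : B)
  : Prop :=
  resid l pre (s b) = (hb b).+1 /\
  forall t', 1 <= t' < s b -> resid l pre t' = hb b.

Definition step (st : state_t) (cy : cycle_t) : state_t :=
  let: (H, hb) := st in let: (l, bs) := cy in
  (fun t => resid l bs t + (H t - l t),
   fun b => hb b - count (fun b' => (s b' == s b) && (hb b' < hb b)) bs).

(* state at the start of cycle c (0-based: cycle c is [nth c sol]) *)
Fixpoint state_at (st0 : state_t) (sol : seq cycle_t) (c : nat) : state_t :=
  match c, sol with
  | 0, _ => st0
  | c'.+1, cy :: sol' => state_at (step st0 cy) sol' c'
  | _.+1, [::] => st0
  end.

Definition cycle0 : cycle_t := (fun _ => 0, [::]).

Definition feasible (m : nat) (st0 : state_t) (sol : seq cycle_t) : Prop :=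
  perm_eq (flatten (map snd sol)) (enum B) /\
  forall c, c < size sol ->
    let: (l, bs) := nth cycle0 sol c in
    let: (H, hb) := state_at st0 sol c in
    (forall t, 1 <= t <= m -> l t <= H t) /\
    (forall pre b post, bs = pre ++ b :: post -> accessible hb l pre b).
End Scrp.

(* Main.v *)
Require Import Defs.
From mathcomp Require Import all_boot.
From mathcomp Require Import zify.

Definition erel (x y : nat) : bool := (y == x) || (x == y.+1).

Lemma mem_path_interval (x : nat) (xs : seq nat) :
  path erel x xs -> forall z, (z \in x :: xs) = (last x xs <= z <= x).
Proof.
elim: xs x => [|y ys IH] x /=.
  by move=> _ z; rewrite inE eqn_leq andbC.
move=> /andP [exy Hp] z.
have IHz := IH y Hp.
have Hy := IHz y; rewrite mem_head in Hy.
have {}Hy : last y ys <= y by symmetry in Hy; case/andP: Hy.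
rewrite in_cons IHz.
move: exy; rewrite /erel => /orP [/eqP E|/eqP E]; subst;
  case: (z =P _) => [->|/eqP ne] /=; apply/idP/idP.
all: try lia.
Qed.

Section S.
Variable B : finType.
Variable s : B -> nat.
Variable hc : B -> nat.
Variable l : nat -> nat.
Hypothesis Hs : forall b, 1 <= s b.

Lemma resid_rcons pre b t :
  resid s l (rcons pre b) t = resid s l pre t - (s b == t).
Proof. by rewrite /resid -cats1 count_cat /= addn0 subnDA. Qed.

Lemma keyK pre b : accessible s hc l pre b -> hc b = resid s l (rcons pre b) 1.
Proof.
move=> [H1 H2]; rewrite resid_rcons.
case: (eqVneq (s b) 1) => [E|ne] /=.
  by rewrite E in H1; rewrite H1 subn1.
rewrite /= subn0 H2 //; have := Hs b; move: ne => /eqP; lia.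
Qed.

Lemma keyE pre b b' : accessible s hc l pre b ->
  accessible s hc l (rcons pre b) b' -> erel (hc b) (hc b').
Proof.
move=> A1 [H1 H2]; rewrite (keyK _ _ A1) /erel.
case: (eqVneq (s b') 1) => [E|ne].
  by rewrite E in H1; rewrite H1 eqxx orbT.
rewrite H2 ?eqxx //; have := Hs b'; move: ne => /eqP; lia.
Qed.

Lemma keyP bs : forall pre b,
  (forall pre' b' post, pre ++ b :: bs = pre' ++ b' :: post ->
      accessible s hc l pre' b') ->
  path erel (hc b) (map hc bs).
Proof.
elim: bs => [|b' bs IH] pre b Hacc //=.
apply/andP; split.
  apply: (@keyE pre b b').
    exact: (Hacc pre b (b' :: bs)).
  apply: (Hacc (rcons pre b) b' bs).
  by rewrite cat_rcons.
apply: (IH (rcons pre b)) => pre' b'' post E.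
by apply: (Hacc pre' b'' post); rewrite -E cat_rcons.
Qed.
End S.

Theorem lemma2 (B : finType) (s : B -> nat) (m : nat)
    (h0 : nat -> nat) (hb0 : B -> nat)
    (* well-formed instance *)
    (Hs : forall b, 1 <= s b <= m)
    (Hh : forall b, hb0 b < h0 (s b))
    (Hinj : forall b b', s b = s b' -> hb0 b = hb0 b' -> b = b')
    (sol : seq (cycle_t B)) (c : nat)
    (Hfeas : feasible s m (h0, hb0) sol) (Hc : c < size sol) :
  let Y := (nth (cycle0 B) sol c).2 in
  let hc := (state_at s (h0, hb0) sol c).2 in
  let hs := sort leq (undup [seq hc b | b <- Y]) in
  forall i, i.+1 < size hs -> nth 0 hs i.+1 = (nth 0 hs i).+1.
Proof.
case: Hfeas => _ /(_ c Hc).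
case: (nth (cycle0 B) sol c) => l bs.
case: (state_at s (h0, hb0) sol c) => H hb [_ Hacc] /=.
have Hs1 : forall b, 1 <= s b by move=> b; case/andP: (Hs b).
case: bs Hacc => [|b0 bs] Hacc i //=.
have Hp := @keyP _ s hb l Hs1 bs [::] b0 Hacc.
have Hm := mem_path_interval _ _ Hp.
set xs := hb b0 :: map hb bs.
set L := last (hb b0) (map hb bs).
have -> : sort leq (undup xs) = iota L (hb b0 - L).+1.
  apply: (irr_sorted_eq ltn_trans ltnn).
  - rewrite ltn_sorted_uniq_leq sort_sorted ?sort_uniq ?undup_uniq //.
    exact: leq_total.
  - exact: iota_ltn_sorted.
  move=> z; rewrite mem_sort mem_undup mem_iota Hm.
  have := Hm (hb b0); rewrite mem_head; lia.
rewrite size_iota => Hi.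
by rewrite !nth_iota // ?addnS //; apply: ltnW.
Qed.
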